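(* Let $a,b\in\mathbb{M}_2$ with $0\le a,b\le 1$, $a\ne0,1$ and $b\neq 0,1$. Then $a$ and $b$ are strict, absolutely compatible and satisfy $ab\ne ba$ if, and only if, the following three properties hold: (1) $\det(a)>0$ and $\det(b)>0$; (2) $\operatorname{trace}(a)=1=\operatorname{trace}(b)$; (3) $\det(a\circ b)=0$.
   Context: $\mathbb{M}_2$ is the algebra of $2\times2$ complex matrices; $\operatorname{trace}$ is the non-normalized trace. For $x\in\mathbb{M}_2$, $|x|=(x^*x)^{1/2}$; $a\circ b=\frac12(ab+ba)$. Elements $0\le a,b\le 1$ are absolutely compatible if $|a-b|+|1-a-b|=1$. For positive $x$, $r(x)$ is its range projection. For $0\le a\le 1$: $s(a)=1-r(1-a)$ and $n(a)=1-r(a)$; a non-zero $0\le a\le 1$ is strict if $s(a)=0=n(a)$. *)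

(* Defs.v *)
(* Scalars: an arbitrary numClosedFieldType C (e.g. algC,
   or R[i] = complex R for a real closed field R such as the reals). *)
From HB Require Import structures.
From mathcomp Require Import all_boot all_order all_algebra.
From Stdlib Require Import ClassicalEpsilon.
Set Implicit Arguments. Unset Strict Implicit. Unset Printing Implicit Defensive.
Import Order.TTheory GRing.Theory Num.Theory.
Local Open Scope ring_scope.

Section M2.
Variable C : numClosedFieldType.
Local Notation M2 := 'M[C]_2.

Definition hadj (m n : nat) (A : 'M[C]_(m, n)) : 'M[C]_(n, m) :=
  (map_mx Num.conj A)^T.

Definition psd (A : M2) : Prop :=
  A = hadj A /\ forall v : 'cV[C]_2, 0 <= (hadj v *m A *m v) 0 0.

Definition unit_interval (a : M2) : Prop := psd a /\ psd (1%:M - a).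

Definition msqrt (x : M2) : M2 :=
  epsilon (inhabits 0) (fun p => psd p /\ p *m p = x).

Definition mabs (x : M2) : M2 := msqrt (hadj x *m x).

Definition jordan (a b : M2) : M2 := (2%:R)^-1 *: (a *m b + b *m a).

Definition abs_compat (a b : M2) : Prop :=
  mabs (a - b) + mabs (1%:M - a - b) = 1%:M.

Definition is_proj (p : M2) : Prop := p = hadj p /\ p *m p = p.

(* range projection: the projection whose range (column space) equals the
   range of x; column spaces are compared as row spaces of transposes. *)
Definition rproj (x : M2) : M2 :=
  epsilon (inhabits 0) (fun p => is_proj p /\ (p^T == x^T)%MS).

Definition sproj (a : M2) : M2 := 1%:M - rproj (1%:M - a).
Definition nproj (a : M2) : M2 := 1%:M - rproj a.

Definition strict (a : M2) : Prop := a != 0 /\ sproj a = 0 /\ nproj a = 0.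

End M2.

(* Main.v *)
Require Import Defs.
From mathcomp Require Import all_boot all_order all_algebra.
From mathcomp Require Import ring.
From Stdlib Require Import ClassicalEpsilon.
Import Order.TTheory GRing.Theory Num.Theory.
Local Open Scope ring_scope.

Lemma sum2 {C : numClosedFieldType} (F : 'I_2 -> C) : \sum_(i < 2) F i = F 0 + F 1.
Proof. rewrite big_ord_recl big_ord1; congr (_ + F _); exact: val_inj. Qed.
Lemma det2 {C : numClosedFieldType} (A : 'M[C]_2) : \det A = A 0 0 * A 1 1 - A 0 1 * A 1 0.
Proof.
rewrite (expand_det_row _ 0) sum2 /cofactor !det_mx11 /= !mxE /=.
have -> : lift 0 (0 : 'I_1) = 1 :> 'I_2 by apply: val_inj.
have -> : lift 1 (0 : 'I_1) = 0 :> 'I_2 by apply: val_inj.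
rewrite expr0 expr1; ring.
Qed.
Lemma tr2 {C : numClosedFieldType} (A : 'M[C]_2) : \tr A = A 0 0 + A 1 1.
Proof. by rewrite /mxtrace sum2. Qed.

Lemma ord2P (i : 'I_2) : i = 0 \/ i = 1.
Proof. case: i => [[|[|//]] Hi]; [left|right]; exact: val_inj. Qed.

Lemma mx2P {C : numClosedFieldType} (A B : 'M[C]_2) :
  A 0 0 = B 0 0 -> A 0 1 = B 0 1 -> A 1 0 = B 1 0 -> A 1 1 = B 1 1 -> A = B.
Proof.
move=> h00 h01 h10 h11; apply/matrixP=> i j.
by case: (ord2P i) => ->; case: (ord2P j) => ->.
Qed.

Lemma mx2E {C : numClosedFieldType} {A B : 'M[C]_2} : A = B ->
  [/\ A 0 0 = B 0 0, A 0 1 = B 0 1, A 1 0 = B 1 0 & A 1 1 = B 1 1].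
Proof. by move=> ->. Qed.


Ltac ent := rewrite ?(mxE, sum2, det2, tr2) /= ?mulr1n ?mulr0n.

Lemma CH2 {C : numClosedFieldType} (A : 'M[C]_2) : A *m A = \tr A *: A - (\det A)%:M.
Proof. apply: mx2P; ent; ring. Qed.

Lemma hadjE {C : numClosedFieldType} (A : 'M[C]_2) i j : hadj A i j = (A j i)^*.
Proof. by rewrite /hadj !mxE. Qed.


Lemma qform {C : numClosedFieldType} (A : 'M[C]_2) (v : 'cV[C]_2) :
  (hadj v *m A *m v) 0 0 = (v 0 0)^* * (A 0 0 * v 0 0 + A 0 1 * v 1 0)
     + (v 1 0)^* * (A 1 0 * v 0 0 + A 1 1 * v 1 0).
Proof. rewrite /hadj; ent; ring. Qed.

Definition cv2 {C : numClosedFieldType} (x y : C) : 'cV[C]_2 :=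
  \col_i (if i == 0 then x else y).
Lemma cv2E {C : numClosedFieldType} (x y : C) : cv2 x y 0 0 = x /\ cv2 x y 1 0 = y.
Proof. by rewrite /cv2 !mxE. Qed.

Lemma hermE {C : numClosedFieldType} {A : 'M[C]_2} : A = hadj A ->
  [/\ (A 0 0)^* = A 0 0, (A 1 1)^* = A 1 1 & A 1 0 = (A 0 1)^*].
Proof.
move=> H; have [h00 h01 h10 h11] := mx2E H; rewrite !hadjE in h00 h01 h10 h11.
by rewrite -h00 -h11 h10.
Qed.

Lemma psd_q {C : numClosedFieldType} {A : 'M[C]_2} x y : psd A ->
  0 <= x^* * (A 0 0 * x + A 0 1 * y) + y^* * (A 1 0 * x + A 1 1 * y).
Proof. by case=> _ /(_ (cv2 x y)); rewrite qform; case: (cv2E x y) => -> ->. Qed.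

Lemma psd_diag {C : numClosedFieldType} {A : 'M[C]_2} : psd A -> 0 <= A 0 0 /\ 0 <= A 1 1.
Proof.
move=> P; split.
  by have := psd_q 1 0 P; rewrite conjC1 conjC0 !mulr0 !mul0r !addr0 mul1r mulr1.
by have := psd_q 0 1 P; rewrite conjC1 conjC0 !mulr0 !mul0r !add0r mul1r mulr1.
Qed.

Lemma conjN {C : numClosedFieldType} (x : C) : (- x)^* = - x^*.
Proof. exact: rmorphN. Qed.

Lemma psd_det {C : numClosedFieldType} {A : 'M[C]_2} : psd A -> 0 <= \det A.
Proof.
move=> P; have [p0 r0] := psd_diag P.
have [hp hr hq] := hermE (proj1 P).
rewrite det2 hq.
have h1 : 0 <= A 0 0 * (A 0 0 * A 1 1 - A 0 1 * (A 0 1)^*).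
  have := psd_q (- A 0 1) (A 0 0) P; rewrite hq conjN hp.
  by congr (0 <= _); ring.
have h2 : 0 <= A 1 1 * (A 0 0 * A 1 1 - A 0 1 * (A 0 1)^*).
  have := psd_q (A 1 1) (- (A 0 1)^*) P; rewrite hq conjN hr conjCK.
  by congr (0 <= _); ring.
rewrite le_eqVlt in p0; case/orP: p0 => [/eqP p0|pp]; last by rewrite -(pmulr_rge0 _ pp).
rewrite le_eqVlt in r0; case/orP: r0 => [/eqP r0|rp]; last by rewrite -(pmulr_rge0 _ rp).
have := psd_q 1 (- (A 0 1)^*) P; rewrite hq conjN conjCK conjC1 -p0 -r0.
move=> h3; rewrite -(pmulr_rge0 _ (ltr0Sn _ 1)).
move: h3; congr (0 <= _); ring.
Qed.

Lemma conjD {C : numClosedFieldType} (x y : C) : (x + y)^* = x^* + y^*.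
Proof. exact: rmorphD. Qed.
Lemma conjM {C : numClosedFieldType} (x y : C) : (x * y)^* = x^* * y^*.
Proof. exact: rmorphM. Qed.
Lemma conjB {C : numClosedFieldType} (x y : C) : (x - y)^* = x^* - y^*.
Proof. exact: rmorphB. Qed.
Lemma conjV {C : numClosedFieldType} (x : C) : (x^-1)^* = (x^*)^-1.
Proof. exact: fmorphV. Qed.

Lemma cc_ge0 {C : numClosedFieldType} (x : C) : 0 <= x^* * x.
Proof. by rewrite mulrC mul_conjC_ge0. Qed.

Lemma psd_tr0 {C : numClosedFieldType} {A : 'M[C]_2} : psd A -> \tr A = 0 -> A = 0.
Proof.
move=> P; have [p0 r0] := psd_diag P; have [hp hr hq] := hermE (proj1 P).
have d0 := psd_det P.
rewrite tr2 => /eqP; rewrite paddr_eq0 // => /andP[/eqP e0 /eqP e1].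
rewrite det2 e0 e1 mul0r sub0r hq oppr_ge0 in d0.
have /eqP : A 0 1 * (A 0 1)^* = 0 by apply/le_anti; rewrite d0 mul_conjC_ge0.
rewrite mul_conjC_eq0 => /eqP q0.
apply: mx2P; rewrite ?mxE //; by rewrite hq q0 conjC0.
Qed.

Lemma psd_bwd {C : numClosedFieldType} (A : 'M[C]_2) : A = hadj A -> 0 <= A 0 0 ->
  0 <= A 1 1 -> 0 <= \det A -> psd A.
Proof.
move=> H p0 r0 d0; split => // v; rewrite qform.
have [hp hr hq] := hermE H.
rewrite det2 hq in d0; rewrite hq.
rewrite le_eqVlt in p0; case/orP: p0 => [/eqP p0|pp].
  rewrite -p0 mul0r sub0r oppr_ge0 in d0.
  have /eqP : A 0 1 * (A 0 1)^* = 0 by apply/le_anti; rewrite d0 mul_conjC_ge0.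
  rewrite mul_conjC_eq0 => /eqP q0.
  rewrite q0 conjC0 -p0 !mul0r !add0r mulrCA.
  by rewrite mulr0 add0r; apply: mulr_ge0 => //; apply: cc_ge0.
rewrite -(pmulr_rge0 _ pp).
set w := A 0 0 * v 0 0 + A 0 1 * v 1 0.
have -> : A 0 0 * ((v 0 0)^* * (A 0 0 * v 0 0 + A 0 1 * v 1 0) +
    (v 1 0)^* * ((A 0 1)^* * v 0 0 + A 1 1 * v 1 0)) =
    w^* * w + (A 0 0 * A 1 1 - A 0 1 * (A 0 1)^*) * ((v 1 0)^* * v 1 0).
  by rewrite /w conjD !conjM hp; ring.
by apply: addr_ge0; [apply: cc_ge0 | apply: mulr_ge0 => //; apply: cc_ge0].
Qed.

Lemma hadj_mul {C : numClosedFieldType} m n p (A : 'M[C]_(m, n)) (B : 'M[C]_(n, p)) :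
  hadj (A *m B) = hadj B *m hadj A.
Proof. by rewrite /hadj map_mxM trmx_mul. Qed.

Lemma hadjK {C : numClosedFieldType} m n (A : 'M[C]_(m, n)) : hadj (hadj A) = A.
Proof. by apply/matrixP => i j; rewrite /hadj !mxE conjCK. Qed.

Lemma psd_gram {C : numClosedFieldType} (h : 'M[C]_2) : psd (hadj h *m h).
Proof.
split; first by rewrite hadj_mul hadjK.
move=> v; rewrite -mulmxA -mulmxA mulmxA -hadj_mul.
rewrite mxE sum2 /hadj !mxE.
by apply: addr_ge0; apply: cc_ge0.
Qed.

Lemma lin2 {C : numClosedFieldType} (a b e1 e2 c1 c2 : C) :
  e1 = 0 -> e2 = 0 -> a - b = c1 * e1 + c2 * e2 -> a = b.
Proof. by move=> -> ->; rewrite !mulr0 addr0 => /eqP; rewrite subr_eq0 => /eqP. Qed.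

Lemma psd0 {C : numClosedFieldType} : psd (0 : 'M[C]_2).
Proof. apply: psd_bwd; rewrite ?mxE ?det2 ?mxE ?mulr0 ?subrr //. by apply/matrixP=> i j; rewrite !mxE conjC0. Qed.

Lemma psd_scalar {C : numClosedFieldType} (m : C) : 0 <= m -> psd (m%:M : 'M[C]_2).
Proof.
move=> m0; apply: psd_bwd; ent => //.
  by apply: mx2P; rewrite hadjE; ent; rewrite ?conjC0 ?geC0_conj.
by rewrite mulr0 subr0 mulr_ge0.
Qed.

Lemma sqrt_ex {C : numClosedFieldType} (X : 'M[C]_2) : psd X -> exists P, psd P /\ P *m P = X.
Proof.
move=> PX.
have [->|Xn0] := eqVneq X 0; first by exists 0; split; [exact: psd0 | rewrite mul0mx].
have [x0 x1] := psd_diag PX; have [hp hr hq] := hermE (proj1 PX).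
have dX := psd_det PX.
have tX0 : 0 <= \tr X by rewrite tr2 addr_ge0.
have tXn : \tr X != 0 by apply: contra_neq Xn0 => /(psd_tr0 PX).
set s := sqrtC (\det X).
have s0 : 0 <= s by rewrite sqrtC_ge0.
have e1 : s ^+ 2 - (X 0 0 * X 1 1 - X 0 1 * X 1 0) = 0 by rewrite sqrtCK det2 subrr.
have u0 : 0 < \tr X + 2%:R * s.
  have tXp : 0 < \tr X by rewrite lt_def tXn tX0.
  by apply: (lt_le_trans tXp); rewrite lerDl mulr_ge0 // ler0n.
set t := sqrtC (\tr X + 2%:R * s).
have t0 : 0 < t by rewrite lt_def sqrtC_ge0 (ltW u0) andbT sqrtC_eq0 gt_eqF.
have tn : t != 0 by rewrite gt_eqF.
have e2 : t ^+ 2 - (X 0 0 + X 1 1 + 2%:R * s) = 0 by rewrite sqrtCK tr2 subrr.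
have ht : t^* = t by apply: geC0_conj; apply: ltW.
have hs : s^* = s by apply: geC0_conj.
exists (t^-1 *: (X + s%:M)); split.
  apply: psd_bwd.
  - apply: mx2P; rewrite hadjE; ent; rewrite ?conjM ?conjV ?conjD ?conjC0 ?ht ?hs ?hp ?hr ?hq ?conjCK //.
  - by ent; rewrite mulr_ge0 ?invr_ge0 ?addr_ge0 // ltW.
  - by ent; rewrite mulr_ge0 ?invr_ge0 ?addr_ge0 // ltW.
  - have -> : \det (t^-1 *: (X + s%:M)) = s; last by [].
    ent. apply: (lin2 _ _ _ _ (- t^-2) (- s * t^-2) e1 e2). by field; rewrite ?tn.
apply: mx2P; ent.
- apply: (lin2 _ _ _ _ (t^-2) (- X 0 0 * t^-2) e1 e2). by field; rewrite ?tn.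
- apply: (lin2 _ _ _ _ (0) (- X 0 1 * t^-2) e1 e2). by field; rewrite ?tn.
- apply: (lin2 _ _ _ _ (0) (- X 1 0 * t^-2) e1 e2). by field; rewrite ?tn.
- apply: (lin2 _ _ _ _ (t^-2) (- X 1 1 * t^-2) e1 e2). by field; rewrite ?tn.
Qed.


Lemma sq_tr0 {C : numClosedFieldType} (A : 'M[C]_2) : \tr A = 0 -> A *m A = (- \det A)%:M.
Proof.
rewrite tr2 => /eqP; rewrite addr_eq0 => /eqP e.
by apply: mx2P; ent; rewrite e; ring.
Qed.

Lemma sqrt_scalar_uniq {C : numClosedFieldType} (P : 'M[C]_2) (m : C) :
  psd P -> 0 <= m -> P *m P = (m ^+ 2)%:M -> P = m%:M.
Proof.
move=> PP m0 H; have [p0 r0] := psd_diag PP.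
have [h00 h01 h10 h11] := mx2E H; move: h00 h01 h10 h11; ent => h00 h01 h10 h11.
have [t0|tn] := eqVneq (\tr P) 0.
  have P0 := psd_tr0 PP t0; rewrite P0 !mxE mulr0 add0r in h00.
  have /eqP : m ^+ 2 = 0 by rewrite -h00.
  by rewrite expf_eq0 /= => /eqP ->; rewrite P0; apply/matrixP=> i j; rewrite !mxE mul0rn.
have q0 : P 0 1 = 0.
  apply: (mulIf tn); rewrite mul0r tr2 -h01; ring.
have q1 : P 1 0 = 0.
  apply: (mulIf tn); rewrite mul0r tr2 -h10; ring.
rewrite q0 q1 mulr0 addr0 in h00; rewrite q0 q1 mulr0 add0r in h11.
apply: mx2P; ent => //.
  by apply/eqP; rewrite -(eqrXn2 (n:=2)) //; rewrite expr2 h00.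
by apply/eqP; rewrite -(eqrXn2 (n:=2)) //; rewrite expr2 h11.
Qed.

Lemma mabs_spec {C : numClosedFieldType} (h : 'M[C]_2) :
  psd (mabs h) /\ mabs h *m mabs h = hadj h *m h.
Proof.
rewrite /mabs /msqrt.
apply: (epsilon_spec (inhabits 0) (fun p => psd p /\ p *m p = hadj h *m h)).
exact: sqrt_ex (psd_gram h).
Qed.

Lemma mabs_scalar {C : numClosedFieldType} (h : 'M[C]_2) (m : C) :
  h = hadj h -> \tr h = 0 -> - \det h = m ^+ 2 -> 0 <= m -> mabs h = m%:M.
Proof.
move=> H t0 d0 m0; have [Pp PP] := mabs_spec h.
by apply: sqrt_scalar_uniq => //; rewrite PP -H sq_tr0 // d0.
Qed.

Lemma eqmx_full {C : numClosedFieldType} n (A B : 'M[C]_n) :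
  row_full A -> row_full B -> (A == B)%MS.
Proof. by move=> fA fB; apply/andP; split; apply: submx_full. Qed.

Lemma rproj_unit {C : numClosedFieldType} (x : 'M[C]_2) : x \in unitmx -> rproj x = 1%:M.
Proof.
move=> xu; rewrite /rproj.
set p := epsilon _ _.
have [[hp pp] eqp] : is_proj p /\ (p^T == x^T)%MS.
  apply: (epsilon_spec (inhabits 0) (fun p => is_proj p /\ (p^T == x^T)%MS)).
  exists 1%:M; split; last by apply: eqmx_full; rewrite row_full_unit ?unitmx_tr ?unitmx1.
  split; last by rewrite mul1mx.
  by apply/matrixP=> i j; rewrite /hadj !mxE rmorphMn /= conjC1 eq_sym.
have pu : p \in unitmx.
  by rewrite -unitmx_tr -row_full_unit (eq_row_full (eqmxP eqp)) row_full_unit unitmx_tr.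
by have := mulKmx pu p; rewrite pp (mulVmx pu) => <-.
Qed.

Lemma smx0 {C : numClosedFieldType} n : (0 : C)%:M = 0 :> 'M[C]_n.
Proof. by apply/matrixP=> i j; rewrite !mxE mul0rn. Qed.
Lemma smxD {C : numClosedFieldType} n (a b : C) : (a + b)%:M = a%:M + b%:M :> 'M[C]_n.
Proof. by apply/matrixP=> i j; rewrite !mxE mulrnDl. Qed.

Lemma rproj_one {C : numClosedFieldType} (x : 'M[C]_2) :
  psd x -> x != 0 -> rproj x = 1%:M -> x \in unitmx.
Proof.
move=> Px xn0 r1; apply/negPn/negP => xnu.
have d0 : \det x = 0 by apply/eqP; move: xnu; rewrite unitmxE unitfE negbK.
have [x0 x1] := psd_diag Px; have [hp hr hq] := hermE (proj1 Px).
have tn : \tr x != 0 by apply: contra_neq xn0 => /(psd_tr0 Px).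
have t0 : 0 <= \tr x by rewrite tr2 addr_ge0.
have ht : (\tr x)^* = \tr x by apply: geC0_conj.
have [[hp' pp'] eqp] : is_proj (rproj x) /\ ((rproj x)^T == x^T)%MS.
  apply: (epsilon_spec (inhabits 0) (fun p => is_proj p /\ (p^T == x^T)%MS)).
  exists ((\tr x)^-1 *: x); split.
    split.
      apply: mx2P; rewrite hadjE; ent; rewrite ?conjM ?conjV ?conjD tr2 in ht *;
        rewrite ?ht ?hp ?hr ?hq ?conjCK //.
    rewrite -scalemxAl -scalemxAr scalerA CH2 d0 smx0 subr0 scalerA.
    by congr (_ *: _); field.
  by rewrite linearZ /=; apply/eqmxP; apply: eqmx_scale; rewrite invr_eq0.
move: xnu; rewrite -unitmx_tr -row_full_unit -(eq_row_full (eqmxP eqp)) r1 trmx1.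
by rewrite row_full_unit unitmx1.
Qed.

Lemma lin1 {C : numClosedFieldType} (a b X Y c : C) : X = Y -> a - b = c * (X - Y) -> a = b.
Proof. by move=> ->; rewrite subrr mulr0 => /eqP; rewrite subr_eq0 => /eqP. Qed.

Lemma HJ {C : numClosedFieldType} (a b : 'M[C]_2) : \tr a = 1 -> \tr b = 1 ->
  \det (jordan a b) = 16%:R^-1 * ((1 + (- \det (1%:M - a - b)) - (- \det (a - b)))^+2
     - 4%:R * (- \det (1%:M - a - b))).
Proof.
rewrite !tr2 => ta tb.
have ea : a 1 1 = 1 - a 0 0 by rewrite -ta; ring.
have eb : b 1 1 = 1 - b 0 0 by rewrite -tb; ring.
rewrite /jordan; ent; rewrite ea eb.
by field; rewrite ?pnatr_eq0.
Qed.

Lemma Dsum {C : numClosedFieldType} (a b : 'M[C]_2) : \tr a = 1 -> \tr b = 1 ->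
  (- \det (a - b)) + (- \det (1%:M - a - b)) + 2%:R * (\det a + \det b) = 1.
Proof.
rewrite !tr2 => ta tb.
have ea : a 1 1 = 1 - a 0 0 by rewrite -ta; ring.
have eb : b 1 1 = 1 - b 0 0 by rewrite -tb; ring.
ent; rewrite ea eb; ring.
Qed.

Lemma det1m {C : numClosedFieldType} (a : 'M[C]_2) : \tr a = 1 -> \det (1%:M - a) = \det a.
Proof.
rewrite !tr2 => ta.
have ea : a 1 1 = 1 - a 0 0 by rewrite -ta; ring.
ent; rewrite ea; ring.
Qed.

Lemma hadjB {C : numClosedFieldType} (A B : 'M[C]_2) : hadj (A - B) = hadj A - hadj B.
Proof. by apply/matrixP=> i j; rewrite /hadj !mxE conjB. Qed.
Lemma hadj1 {C : numClosedFieldType} : hadj (1%:M : 'M[C]_2) = 1%:M.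
Proof. by apply/matrixP=> i j; rewrite /hadj !mxE rmorphMn /= conjC1 eq_sym. Qed.

Lemma herm0 {C : numClosedFieldType} (h : 'M[C]_2) : h = hadj h -> h *m h = 0 -> h = 0.
Proof.
move=> H /mx2E[e00 _ _ e11]; move: e00 e11; ent => e00 e11.
have [hp hr hq] := hermE H.
rewrite hq in e00 e11.
have /eqP : h 0 0 * (h 0 0)^* + h 0 1 * (h 0 1)^* = 0 by rewrite hp.
rewrite paddr_eq0 ?mul_conjC_ge0 // !mul_conjC_eq0 => /andP[/eqP p0 /eqP q0].
have /eqP : h 1 1 * (h 1 1)^* + h 0 1 * (h 0 1)^* = 0 by rewrite hr -e11; ring.
rewrite paddr_eq0 ?mul_conjC_ge0 // !mul_conjC_eq0 => /andP[/eqP r0 _].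
by apply: mx2P; rewrite ?mxE ?hq ?q0 ?conjC0.
Qed.

Lemma herm_D {C : numClosedFieldType} (h : 'M[C]_2) : h = hadj h -> \tr h = 0 -> 0 <= - \det h.
Proof.
move=> H; have [hp hr hq] := hermE H.
rewrite tr2 => /eqP; rewrite addr_eq0 => /eqP e.
have -> : - \det h = h 1 1 * (h 1 1)^* + h 0 1 * (h 0 1)^* by rewrite det2 e hq hr; ring.
by rewrite addr_ge0 ?mul_conjC_ge0.
Qed.

Lemma comm_of {C : numClosedFieldType} (a b : 'M[C]_2) x y :
  a = x *: b + y%:M -> a *m b = b *m a.
Proof.
move=> ->; rewrite mulmxDl mulmxDr -scalemxAl -scalemxAr mul_scalar_mx mul_mx_scalar.
done.
Qed.


Lemma herm_sub {C : numClosedFieldType} {A B : 'M[C]_2} :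
  A = hadj A -> B = hadj B -> A - B = hadj (A - B).
Proof. by move=> HA HB; rewrite hadjB -HA -HB. Qed.

Lemma unit_det {C : numClosedFieldType} (A : 'M[C]_2) : 0 < \det A -> A \in unitmx.
Proof. by move=> d; rewrite unitmxE unitfE gt_eqF. Qed.

Lemma bwd {C : numClosedFieldType} (a b : 'M[C]_2) :
  unit_interval a -> unit_interval b -> a != 0 -> b != 0 ->
  ((0 < \det a /\ 0 < \det b) /\ (\tr a = 1 /\ \tr b = 1) /\ \det (jordan a b) = 0) ->
  (strict a /\ strict b /\ abs_compat a b /\ a *m b != b *m a).
Proof.
move=> [[Ha _] _] [[Hb _] _] a0 b0 [[da db] [[ta tb] dj]].
have st : forall x : 'M[C]_2, x != 0 -> 0 < \det x -> \tr x = 1 -> strict x.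
  move=> x x0 dx tx; split=> //; split.
    by rewrite /sproj rproj_unit ?subrr // unit_det // det1m.
  by rewrite /nproj rproj_unit ?subrr // unit_det.
split; first exact: st.
split; first exact: st.
split; last first.
  apply/negP => /eqP E; move: dj; rewrite /jordan E -mulr2n -scaler_nat scalerA mulVf ?pnatr_eq0 //.
  by rewrite scale1r det_mulmx => /eqP; rewrite mulf_eq0 !gt_eqF.
have H1 : a - b = hadj (a - b) by apply: herm_sub.
have H2 : 1%:M - a - b = hadj (1%:M - a - b) := herm_sub (herm_sub (esym hadj1) Ha) Hb.
have [ta' tb'] : (a 0 0 + a 1 1 - 1 = 0) /\ (b 0 0 + b 1 1 - 1 = 0).
  by move: ta tb; rewrite !tr2 => -> ->; rewrite subrr.
have T1 : \tr (a - b) = 0.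
  by rewrite tr2; ent; apply: (lin2 _ _ _ _ 1 (-1) ta' tb'); ring.
have T2 : \tr (1%:M - a - b) = 0.
  by rewrite tr2; ent; apply: (lin2 _ _ _ _ (-1) (-1) ta' tb'); ring.
have D1 := herm_D _ H1 T1; have D2 := herm_D _ H2 T2.
have DS := Dsum _ _ ta tb.
have HJ' := HJ _ _ ta tb; rewrite dj in HJ'.
set d1 := - \det (a - b) in D1 DS HJ'; set d2 := - \det (1%:M - a - b) in D2 DS HJ'.
set s := sqrtC d2.
have s0 : 0 <= s by rewrite sqrtC_ge0.
have s2 : s ^+ 2 = d2 by rewrite sqrtCK.
have Dlt : d1 + d2 < 1.
  rewrite -DS ltrDl mulr_gt0 ?ltr0Sn //.
  by rewrite addr_gt0.
have d1lt : d1 < 1 by apply: le_lt_trans Dlt; rewrite lerDl.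
have d2lt : d2 < 1 by apply: le_lt_trans Dlt; rewrite lerDr.
have sq : (1 + d2 - d1) ^+ 2 = (2%:R * s) ^+ 2.
  apply/eqP; rewrite -subr_eq0; apply/eqP.
  have : 16%:R^-1 * ((1 + d2 - d1) ^+ 2 - 4%:R * d2) = 0 by rewrite HJ'.
  rewrite -s2 => /eqP; rewrite mulf_eq0 invr_eq0 pnatr_eq0 /= => /eqP <-; ring.
move/eqP: sq; rewrite eqf_sqr => /orP[/eqP e | /eqP e]; last first.
  exfalso; have : 1 <= d1.
    have -> : d1 = 1 + (d2 + 2%:R * s) by apply: (lin1 _ _ _ _ (-1) e); ring.
    by rewrite lerDl addr_ge0 // mulr_ge0 // ler0n.
  by move=> h; have := lt_le_trans d1lt h; rewrite ltxx.
have s1 : s <= 1 by rewrite -(expr_le1 (n:=2)) // s2 ltW.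
have m0 : 0 <= 1 - s by rewrite subr_ge0.
rewrite /abs_compat (mabs_scalar _ (1 - s) H1 T1) //; last first.
  rewrite -/d1; have -> : d1 = 1 + d2 - 2%:R * s by apply: (lin1 _ _ _ _ (-1) e); ring.
  by rewrite -s2; ring.
rewrite (mabs_scalar _ s H2 T2) //.
by rewrite -smxD subrK.
Qed.


Lemma CH_sqrt {C : numClosedFieldType} (P h : 'M[C]_2) : \tr P != 0 -> P *m P = h *m h ->
  P = (\tr h / \tr P) *: h + ((\det P - \det h) / \tr P)%:M.
Proof.
move=> tn E.
have e : \tr P *: P - (\det P)%:M = \tr h *: h - (\det h)%:M by rewrite -!CH2.
have tn' : P 0 0 + P 1 1 != 0 by rewrite -tr2.
have [e00 e01 e10 e11] := mx2E e; move: e00 e01 e10 e11; ent => e00 e01 e10 e11.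
apply: mx2P; ent.
- by apply: (lin1 _ _ _ _ (P 0 0 + P 1 1)^-1 e00); field.
- by apply: (lin1 _ _ _ _ (P 0 0 + P 1 1)^-1 e01); field.
- by apply: (lin1 _ _ _ _ (P 0 0 + P 1 1)^-1 e10); field.
- by apply: (lin1 _ _ _ _ (P 0 0 + P 1 1)^-1 e11); field.
Qed.

Lemma lin_comb {C : numClosedFieldType} (a b : 'M[C]_2) k1 k2 c1 c2 :
  k1 *: (a - b) + c1%:M + (k2 *: (1%:M - a - b) + c2%:M) = 1%:M ->
  (k1 - k2) *: a = (k1 + k2) *: b + (1 - c1 - c2 - k2)%:M.
Proof.
move=> e; have [e00 e01 e10 e11] := mx2E e; move: e00 e01 e10 e11; ent => e00 e01 e10 e11.
apply: mx2P; ent.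
- by apply: (lin1 _ _ _ _ 1 e00); ring.
- by apply: (lin1 _ _ _ _ 1 e01); ring.
- by apply: (lin1 _ _ _ _ 1 e10); ring.
- by apply: (lin1 _ _ _ _ 1 e11); ring.
Qed.

Lemma smxN {C : numClosedFieldType} n (a : C) : (- a)%:M = - a%:M :> 'M[C]_n.
Proof. by apply/matrixP=> i j; rewrite !mxE mulNrn. Qed.

Lemma comm_case {C : numClosedFieldType} (a b : 'M[C]_2) k1 k2 s :
  (k1 - k2) *: a = (k1 + k2) *: b + s%:M -> a *m b != b *m a -> k1 = 0 /\ k2 = 0.
Proof.
move=> E nc.
have [k0|kn] := eqVneq (k1 - k2) 0; last first.
  exfalso; move/negP: nc; apply; apply/eqP; apply: (comm_of _ _ ((k1 - k2)^-1 * (k1 + k2)) ((k1 - k2)^-1 * s)).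
  by rewrite -scalerA -scale_scalar_mx -scalerDr -E scalerA mulVf // scale1r.
have [l0|ln] := eqVneq (k1 + k2) 0; last first.
  exfalso; move/negP: nc; apply; apply/eqP; apply: esym.
  apply: (comm_of _ _ 0 ((k1 + k2)^-1 * - s)).
  rewrite k0 scale0r in E.
  have Lb : (k1 + k2) *: b = (- s)%:M.
    by apply/eqP; rewrite smxN -addr_eq0 -E.
  by rewrite scale0r add0r -scale_scalar_mx -Lb scalerA mulVf // scale1r.
split.
  by apply: (lin2 _ _ _ _ (2%:R^-1) (2%:R^-1) k0 l0); field.
by apply: (lin2 _ _ _ _ (- 2%:R^-1) (2%:R^-1) k0 l0); field.
Qed.

Lemma scal_sq {C : numClosedFieldType} (h : 'M[C]_2) m :
  \tr h = 0 -> m%:M *m m%:M = h *m h -> - \det h = m ^+ 2.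
Proof.
move=> t0; rewrite (sq_tr0 _ t0) => /mx2E [e _ _ _]; move: e; ent => e.
by rewrite -e; ring.
Qed.

Lemma fwd {C : numClosedFieldType} (a b : 'M[C]_2) :
  unit_interval a -> unit_interval b -> a != 0 -> b != 0 ->
  (strict a /\ strict b /\ abs_compat a b /\ a *m b != b *m a) ->
  ((0 < \det a /\ 0 < \det b) /\ (\tr a = 1 /\ \tr b = 1) /\ \det (jordan a b) = 0).
Proof.
move=> [Pa _] [Pb _] a0 b0 [sa [sb [ac nc]]].
have Ha := proj1 Pa; have Hb := proj1 Pb.
have dpos : forall x : 'M[C]_2, psd x -> x != 0 -> strict x -> 0 < \det x.
  move=> x Px x0 [_ [_ nx]].
  have r1 : rproj x = 1%:M by move: nx; rewrite /nproj => /eqP; rewrite subr_eq0 eq_sym => /eqP.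
  have xu := rproj_one _ Px x0 r1.
  by rewrite lt_def psd_det // andbT; move: xu; rewrite unitmxE unitfE.
split; first by split; apply: dpos.
have H1 : a - b = hadj (a - b) := herm_sub Ha Hb.
have H2 : 1%:M - a - b = hadj (1%:M - a - b) := herm_sub (herm_sub (esym hadj1) Ha) Hb.
have [PP1 SP1] := mabs_spec (a - b); rewrite -H1 in SP1.
have [PP2 SP2] := mabs_spec (1%:M - a - b); rewrite -H2 in SP2.
move: ac; rewrite /abs_compat.
move: (mabs (a - b)) (mabs (1%:M - a - b)) PP1 SP1 PP2 SP2 => P1 P2 PP1 SP1 PP2 SP2 ac.
have t1n : \tr P1 != 0.
  apply/eqP => t0; move: SP1; rewrite (psd_tr0 PP1 t0) mul0mx => /esym /(herm0 _ H1) /eqP.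
  by rewrite subr_eq0 => /eqP E; move: nc; rewrite E eqxx.
have t2n : \tr P2 != 0.
  apply/eqP => t0; move: SP2; rewrite (psd_tr0 PP2 t0) mul0mx => /esym /(herm0 _ H2) /eqP.
  rewrite subr_eq0 => /eqP E; move/negP: nc; apply; apply/eqP/esym.
  by apply: (comm_of _ _ (-1) 1); rewrite -E scaleN1r addrC.
have eP1 := CH_sqrt _ _ t1n SP1; have eP2 := CH_sqrt _ _ t2n SP2.
have K := lin_comb _ _ _ _ _ _ (eq_trans (esym (congr2 +%R eP1 eP2)) ac).
have [k1 k2] := comm_case _ _ _ _ _ K nc.
have T1 : \tr (a - b) = 0 by move/eqP: k1; rewrite mulf_eq0 invr_eq0 (negbTE t1n) orbF => /eqP.
have T2 : \tr (1%:M - a - b) = 0 by move/eqP: k2; rewrite mulf_eq0 invr_eq0 (negbTE t2n) orbF => /eqP.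
have [ta tb] : \tr a = 1 /\ \tr b = 1.
  move: T1 T2; rewrite !tr2; ent => T1 T2.
  split.
    by apply: (lin2 _ _ _ _ (2%:R^-1) (- 2%:R^-1) T1 T2); field.
  by apply: (lin2 _ _ _ _ (- 2%:R^-1) (- 2%:R^-1) T1 T2); field.
split=> //.
rewrite k1 k2 !scale0r !add0r in eP1 eP2.
set m1 := (_ / \tr P1) in eP1; set m2 := (_ / \tr P2) in eP2.
have D1 := scal_sq _ _ T1 (eq_trans (congr2 mulmx (esym eP1) (esym eP1)) SP1).
have D2 := scal_sq _ _ T2 (eq_trans (congr2 mulmx (esym eP2) (esym eP2)) SP2).
have m12 : m2 = 1 - m1.
  move: ac; rewrite eP1 eP2 => /mx2E [e _ _ _]; move: e; ent => e.
  by rewrite -e; ring.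
rewrite (HJ _ _ ta tb) D1 D2 m12; ring.
Qed.

Theorem theorem3p3 (C : numClosedFieldType) (a b : 'M[C]_2) :
  unit_interval a -> unit_interval b ->
  a != 0 -> a != 1%:M -> b != 0 -> b != 1%:M ->
  (strict a /\ strict b /\ abs_compat a b /\ a *m b != b *m a) <->
  ((0 < \det a /\ 0 < \det b) /\
   (\tr a = 1 /\ \tr b = 1) /\
   \det (jordan a b) = 0).
Proof.
move=> ua ub a0 _ b0 _; split; [exact: fwd | exact: bwd].
Qed.
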